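(* Let $[\mathcal{S},\mathcal{T},\mathcal{R}]$ be a backdoor triple with $\mathcal{S},\mathcal{T},\mathcal{R}$ finite, and let $a$ be the maximum arity of the relations in $\mathcal{S}$. Then there is a branching map for the sidedoor triple $\llbracket\mathcal{S}\cup\mathcal{R},\mathcal{T}\cup\mathcal{R},r\rrbracket$ whenever $r\ge\max(2,a)$.
   Context: A partition scheme is a set $\mathcal{R}$ of binary relations over a domain $D$ that are pairwise disjoint, whose union is $D^2$, which contains equality on $D$, and which is closed under converses. A backdoor triple $[\mathcal{S},\mathcal{T},\mathcal{R}]$ consists of a partition scheme $\mathcal{R}$ and two sets $\mathcal{S},\mathcal{T}$ of relations over $D$ each definable in $\mathcal{R}$ by a quantifier-free first-order formula (with equality, without parameters). A sidedoor triple $\llbracket\mathcal{S}',\mathcal{T}',r\rrbracket$ consists of two sets of relations $\mathcal{S}',\mathcal{T}'$ over a common domain with $\mathcal{T}'\subseteq\mathcal{S}'$ and an integer $r\ge1$. For distinct variables $x_1,\dots,x_r$, let $\mathcal{S}'_r$ (resp. $\mathcal{T}'_r$) be the set of $\mathrm{CSP}(\mathcal{S}')$ (resp. $\mathrm{CSP}(\mathcal{T}')$) instances with variable set $\{x_1,\dots,x_r\}$. A branching map for $\llbracket\mathcal{S}',\mathcal{T}',r\rrbracket$ (from $\mathcal{S}'$ to $\mathcal{T}'$ with radius $r$) is a total map $\Omega\colon\mathcal{S}'_r\to2^{\mathcal{T}'_r}$ with $\mathrm{Sol}(I)=\bigcup_{I'\in\Omega(I)}\mathrm{Sol}(I')$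 for every $I\in\mathcal{S}'_r$, where $\mathrm{Sol}$ denotes the set of satisfying assignments. *)

(* Defs.v *)
From mathcomp Require Import all_boot.
From Stdlib Require List.
Set Implicit Arguments. Unset Strict Implicit. Unset Printing Implicit Defensive.

Definition relation (D : Type) : Type := {k : nat & ('I_k -> D) -> Prop}.

Definition arity (D : Type) (rho : relation D) : nat := projT1 rho.

Definition binrel (D : Type) (rho : D -> D -> Prop) : relation D :=
  existT (fun k => ('I_k -> D) -> Prop) 2
    (fun t => rho (t (@Ordinal 2 0 isT)) (t (@Ordinal 2 1 isT))).

Definition partition_scheme (D : Type) (R : seq (D -> D -> Prop)) : Prop :=
  [/\ (forall rho sigma, List.In rho R -> List.In sigma R -> rho <> sigma ->
         forall x y, ~ (rho x y /\ sigma x y)),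
      (forall x y, exists2 rho, List.In rho R & rho x y),
      List.In (fun x y : D => x = y) R
    & (forall rho, List.In rho R -> List.In (fun x y => rho y x) R)].

(* Quantifier-free first-order formulas with equality in k free variables,
   whose atoms are binary relations (required to belong to R, see below). *)
Inductive qf (D : Type) (k : nat) : Type :=
| QTrue
| QEq of 'I_k & 'I_k
| QAtom of (D -> D -> Prop) & 'I_k & 'I_k
| QNot of qf D k
| QAnd of qf D k & qf D k
| QOr of qf D k & qf D k.

Fixpoint qf_atoms_in (D : Type) (k : nat) (R : seq (D -> D -> Prop))
    (phi : qf D k) : Prop :=
  match phi with
  | QTrue => True
  | QEq _ _ => True
  | QAtom rho _ _ => List.In rho R
  | QNot p => qf_atoms_in R p
  | QAnd p q => qf_atoms_in R p /\ qf_atoms_in R q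
  | QOr p q => qf_atoms_in R p /\ qf_atoms_in R q
  end.

Fixpoint qf_eval (D : Type) (k : nat) (phi : qf D k) (t : 'I_k -> D) : Prop :=
  match phi with
  | QTrue => True
  | QEq i j => t i = t j
  | QAtom rho i j => rho (t i) (t j)
  | QNot p => ~ qf_eval p t
  | QAnd p q => qf_eval p t /\ qf_eval q t
  | QOr p q => qf_eval p t \/ qf_eval q t
  end.

Definition qf_definable (D : Type) (R : seq (D -> D -> Prop)) (rho : relation D)
  : Prop :=
  exists phi : qf D (arity rho),
    qf_atoms_in R phi /\ forall t, projT2 rho t <-> qf_eval phi t.

Definition backdoor_triple (D : Type) (S T : seq (relation D))
    (R : seq (D -> D -> Prop)) : Prop :=
  [/\ partition_scheme R,
      (forall s, List.In s S -> qf_definable R s)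
    & (forall t, List.In t T -> qf_definable R t)].

Record constraint (D : Type) (r : nat) := Constraint {
  c_rel : relation D;
  c_scope : 'I_(arity c_rel) -> 'I_r }.

Definition instance (D : Type) (r : nat) := seq (constraint D r).

Definition instance_of (D : Type) (r : nat) (Gamma : seq (relation D))
    (I : instance D r) : Prop :=
  forall c, List.In c I -> List.In (c_rel c) Gamma.

Definition Sol (D : Type) (r : nat) (I : instance D r) (f : 'I_r -> D) : Prop :=
  forall c, List.In c I -> projT2 (c_rel c) (fun i => f (@c_scope D r c i)).

Definition branching_map (D : Type) (S' T' : seq (relation D)) (r : nat)
    (Omega : instance D r -> (instance D r -> Prop)) : Prop :=
  forall I, instance_of S' I ->
    (forall I', Omega I I' -> instance_of T' I') /\
    (forall f, Sol I f <-> exists2 I', Omega I I' & Sol I' f).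

(* Main.v *)
Require Import Defs.
From mathcomp Require Import all_boot.
From Stdlib Require List.
From Stdlib Require Import Classical.

Section Aux.
Variable D : Type.
Variable R : seq (D -> D -> Prop).
Hypothesis HR : partition_scheme R.

Definition same_type {r : nat} (f g : 'I_r -> D) :=
  forall i j, exists2 rho, List.In rho R & rho (f i) (f j) /\ rho (g i) (g j).

Lemma atom_same (sigma : D -> D -> Prop) a b c d :
  List.In sigma R ->
  (exists2 rho, List.In rho R & rho a b /\ rho c d) ->
  sigma a b -> sigma c d.
Proof.
case: HR => Hdis _ _ _ Hs [rho Hr [H1 H2]] Hab.
case: (classic (sigma = rho)) => [->//|Hne].
exfalso; exact: (Hdis sigma rho Hs Hr Hne a b (conj Hab H1)).
Qed.

Lemma qf_same (r k : nat) (f g : 'I_r -> D) (s : 'I_k -> 'I_r) (phi : qf D k) :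
  same_type f g -> qf_atoms_in R phi ->
  (qf_eval phi (fun i => f (s i)) <-> qf_eval phi (fun i => g (s i))).
Proof.
move=> Hst; elim: phi => //=.
- move=> a b _; have Heq : List.In (fun x y : D => x = y) R by case: HR.
  split.
  + apply: (atom_same (fun x y : D => x = y)) => //.
  + apply: (atom_same (fun x y : D => x = y)) => //.
    case: (Hst (s a) (s b)) => rho Hr [H1 H2]; by exists rho.
- move=> sigma a b Hs; split.
  + by apply: atom_same.
  + apply: atom_same => //.
    case: (Hst (s a) (s b)) => rho Hr [H1 H2]; by exists rho.
- move=> p IH Ha; have := IH Ha; tauto.
- move=> p IHp q IHq [Hp Hq]; have := IHp Hp; have := IHq Hq; tauto.
- move=> p IHp q IHq [Hp Hq]; have := IHp Hp; have := IHq Hq; tauto.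
Qed.

Lemma def_same (r : nat) (f g : 'I_r -> D) (rel : relation D)
   (s : 'I_(arity rel) -> 'I_r) :
  same_type f g -> qf_definable R rel ->
  projT2 rel (fun i => f (s i)) -> projT2 rel (fun i => g (s i)).
Proof.
move=> Hst [phi [Ha Hphi]] H.
apply/Hphi; apply (proj1 (qf_same _ _ _ _ s phi Hst Ha)); exact/Hphi.
Qed.
End Aux.

Lemma In_mem (T : eqType) (x : T) (s : seq T) : x \in s -> List.In x s.
Proof.
elim: s => //= y s IH; rewrite inE => /orP [/eqP ->|/IH]; [left|right] => //.
Qed.

Lemma In_smap (A B : Type) (f : A -> B) x l : List.In x l -> List.In (f x) (map f l).
Proof. elim: l => //= y l IH [->|H]; [left|right; apply: IH] => //. Qed.

Lemma In_smap_inv (A B : Type) (f : A -> B) y l :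
  List.In y (map f l) -> exists x, f x = y /\ List.In x l.
Proof.
elim: l => //= x l IH [<-|H]; first by exists x; split => //; left.
have [z [Hz Hz']] := IH H; exists z; split => //; by right.
Qed.

Theorem mainTheorem12 (D : Type) (S T : seq (relation D))
    (R : seq (D -> D -> Prop)) (r : nat) :
  backdoor_triple S T R ->
  (maxn 2 (\max_(s <- S) arity s) <= r)%N ->
  exists Omega : instance D r -> (instance D r -> Prop),
    @branching_map D (S ++ map (@binrel D) R) (T ++ map (@binrel D) R) r Omega.
Proof.
move=> [HR HS HT] _.
exists (fun I I' => instance_of (T ++ map (@binrel D) R) I' /\
                    (forall g, Sol I' g -> Sol I g)).
move=> I HI; split; first by move=> I' [].
move=> f; split; last by move=> [I' [_ H] Hf]; exact: H.
move=> Hf.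
have Hbuild : forall l : seq ('I_r * 'I_r), exists I' : instance D r,
  [/\ instance_of (T ++ map (@binrel D) R) I',
      Sol I' f &
      forall g, Sol I' g -> forall p, List.In p l ->
        exists2 rho, List.In rho R & rho (f p.1) (f p.2) /\ rho (g p.1) (g p.2)].
  elim=> [|p l [I' [H1 H2 H3]]].
    by exists [::]; split => // c [].
  have [rho Hr Hrho] : exists2 rho, List.In rho R & rho (f p.1) (f p.2).
    by case: HR => _ Hc _ _; apply: Hc.
  pose c := @Constraint D r (binrel rho)
              (fun i : 'I_2 => if val i == 0 then p.1 else p.2).
  exists (c :: I'); split.
  - move=> c' /= [<-|Hc]; last exact: H1.
    by apply: List.in_or_app; right; apply: In_smap.
  - move=> c' /= [<-|Hc]; last exact: H2.
    exact: Hrho.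
  - move=> g Hg q /= [<-|Hq].
      exists rho => //; split => //.
      exact: (Hg c (or_introl erefl)).
    apply: H3 => //; move=> c' Hc'; apply: Hg; by right.
have [I' [H1 H2 H3]] := Hbuild (enum {: 'I_r * 'I_r}).
exists I' => //; split => // g Hg c Hc.
have Hst : @same_type D R r f g.
  move=> i j; apply: (H3 g Hg (i, j)); apply: In_mem; by rewrite mem_enum.
apply: (@def_same D R HR r f g (c_rel c) (@c_scope D r c) Hst); last exact: Hf.
case: (List.in_app_or _ _ _ (HI c Hc)) => [Hs|Hm]; first exact: HS.
have [rho [<- Hr]] := @In_smap_inv _ _ _ _ _ Hm.
exists (QAtom rho (@Ordinal 2 0 isT) (@Ordinal 2 1 isT)); split => //.
Qed.
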